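(* Let $G$ be a loopless multigraph and $k\ge 1$ an integer with $k \geq \Delta^{\mu}(G)-1$. If $G^*$ has no cycle of length greater than $2$ (equivalently, merging parallel edges of $G^*$ yields a forest), then $G$ is $k$-edge-colorable.
   Context: $d(v)$ is the degree of $v$ in $G$ (counting multiplicities), $\mu(v,w)$ is the number of edges joining $v,w$, $\mu(v)=\max_w \mu(v,w)$, and $\Delta^{\mu}(G)=\max_{v\in V(G)}[d(v)+\mu(v)]$. $G^*$ is the subgraph of $G$ induced by all vertices $v$ with $d(v)+\mu(v)=\Delta^{\mu}(G)$. $k$-edge-colorable means there is an assignment of colors from $\{1,\dots,k\}$ to edges so that distinct edges sharing an endpoint get distinct colors. *)

(* Defs.v *)
From mathcomp Require Import all_boot.
Set Implicit Arguments. Unset Strict Implicit. Unset Printing Implicit Defensive.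

(* A multigraph on vertex set V with edge set E: each edge e has endpoints
   (ends e).1 and (ends e).2.  Parallel edges = distinct edges with the same
   endpoint pair. *)
Section MG.
Variables (V E : finType) (ends : E -> V * V).

Definition loopless : Prop := forall e : E, (ends e).1 != (ends e).2.

Definition incident (v : V) (e : E) : bool := ((ends e).1 == v) || ((ends e).2 == v).

Definition deg (v : V) : nat := #|[set e : E | incident v e]|.

Definition mult (v w : V) : nat :=
  #|[set e : E | (((ends e).1 == v) && ((ends e).2 == w))
              || (((ends e).1 == w) && ((ends e).2 == v))]|.

Definition mult_max (v : V) : nat := \max_(w : V) mult v w.

Definition Delta_mu : nat := \max_(v : V) (deg v + mult_max v).

Definition in_Gstar (v : V) : bool := deg v + mult_max v == Delta_mu.

Definition Gstar_adj : rel V :=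
  fun v w => [&& in_Gstar v, in_Gstar w & 0 < mult v w].

Definition Gstar_no_long_cycle : Prop :=
  ~ exists s : seq V, [/\ uniq s, 3 <= size s & cycle Gstar_adj s].

(* k-edge-colorability: colors are 'I_k (i.e. {1,...,k} shifted by one);
   distinct edges sharing an endpoint get distinct colors. *)
Definition edge_colorable (k : nat) : Prop :=
  exists c : E -> 'I_k,
    forall e f : E, e != f -> (exists v : V, incident v e && incident v f) ->
      c e != c f.
End MG.

(* Main.v *)
Require Import Defs.
From mathcomp Require Import all_boot.
From mathcomp Require Import zify.
From Stdlib Require Import Classical_Prop.
Set Implicit Arguments. Unset Strict Implicit. Unset Printing Implicit Defensive.
Lemma closed_conn (T : finType) (e : rel T) (P : pred T) a b :
  (forall u v, P u -> e u v -> P v) -> P a -> connect e a b -> P b.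
Proof.
move=> cl Pa /connectP [p pth ->].
elim: p a Pa pth => [|c p IH] a Pa //= /andP [eac pth].
exact: IH (cl _ _ Pa eac) pth.
Qed.

Lemma iter_mul_order (T : finType) (f : T -> T) (fi : injective f) x m :
  iter (m * order f x) f x = x.
Proof.
elim: m => [|m IH]; first by rewrite mul0n.
by rewrite mulSn iterD IH iter_order.
Qed.

Lemma iter_fix_dvd (T : finType) (f : T -> T) (fi : injective f) x n :
  iter n f x = x -> order f x %| n.
Proof.
move=> H.
have L0 : 0 < order f x by rewrite -orderSpred.
have H2 : iter (n %% order f x) f x = x.
  by move: H; rewrite {1}(divn_eq n (order f x)) addnC iterD iter_mul_order.
have := findex_iter (ltn_pmod n L0); rewrite H2 findex0 => H3.
by rewrite /dvdn -H3.
Qed.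

Lemma invol_fix (T : finType) (sa sb : T -> T) (R : rel T) x y z :
  involutive sa -> involutive sb ->
  (forall u w, R u w -> w = sa u \/ w = sb u) -> sb x = x ->
  connect R x y -> connect R x z -> sa y = y -> sa z = z -> y = z.
Proof.
move=> ia ib HR bx cy cz fy fz.
pose pi v := sb (sa v).
have ipi : injective pi.
  by move=> u v; rewrite /pi => /(inv_inj ib) /(inv_inj ia).
have k1 v : pi (sa (pi v)) = sa v by rewrite /pi ia ib.
have k2 i v : iter i pi (sa (iter i pi v)) = sa v.
  elim: i => [|i IH] //; by rewrite iterSr iterS k1.
have k3 i : iter i.+1 pi (sa (iter i pi x)) = x.
  by rewrite iterS k2 /pi ia bx.
have clO : forall u w, fconnect pi x u -> R u w -> fconnect pi x w.
  move=> u w /iter_findex <-; set i := findex _ _ _.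
  have hsa : fconnect pi x (sa (iter i pi x)).
    rewrite fconnect_sym //; apply/connectP.
    have := fconnect_iter pi i.+1 (sa (iter i pi x)); rewrite k3.
    by move/connectP.
  case/HR => ->; first exact: hsa.
  have -> : sb (iter i pi x) = pi (sa (iter i pi x)) by rewrite /pi ia.
  exact: connect_trans hsa (fconnect1 _ _).
have Oy := closed_conn clO (connect0 _ x) cy.
have Oz := closed_conn clO (connect0 _ x) cz.
have fixi : forall w, fconnect pi x w -> sa w = w ->
   order pi x = (findex pi x w).*2.+1.
  move=> w Ow fw.
  have jl := findex_max Ow.
  set j := findex pi x w.
  have {}fw : sa (iter j pi x) = iter j pi x by rewrite /j iter_findex.
  have : iter (j.+1 + j) pi x = x by rewrite iterD -{1}fw k3.
  move/(iter_fix_dvd ipi) => /dvdnP [q Hq].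
  have : q = 1.
    have L0 : 0 < order pi x by lia.
    have qL : q * order pi x < 2 * order pi x by nia.
    rewrite ltn_pmul2r // in qL.
    case: q Hq qL => [|[|q]] Hq qL //; by rewrite mul0n in Hq.
  by move=> qe; rewrite qe mul1n in Hq; rewrite -Hq -addnn addSn.
have := fixi _ Oy fy; rewrite (fixi _ Oz fz) => /eqP.
rewrite eqSS -!muln2 eqn_pmul2r // => /eqP Hj.
by rewrite -(iter_findex Oy) -(iter_findex Oz) Hj.
Qed.
Lemma uniq_size_card (T : finType) (s : seq T) : uniq s -> size s <= #|T|.
Proof. by move=> us; rewrite cardT; apply: uniq_leq_size => // x _; rewrite mem_enum. Qed.

Lemma leaf_exists (T : finType) (R : rel T) (t0 : T) :
  symmetric R -> irreflexive R ->
  ~ (exists s : seq T, [/\ uniq s, 3 <= size s & cycle R s]) ->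
  exists v, (v = t0 \/ exists w, R v w) /\
            (forall u1 u2, R v u1 -> R v u2 -> u1 = u2).
Proof.
move=> Rs Ri noc.
have cb := @uniq_size_card T.
move: #|T| cb => N cb.
suff: forall m v p, uniq (v :: p) -> path R v p -> last v p = t0 ->
    N - size p <= m ->
  exists v, (v = t0 \/ exists w, R v w) /\
            (forall u1 u2, R v u1 -> R v u2 -> u1 = u2).
  by move/(_ N t0 [::]); apply => //; rewrite subn0.
elim=> [|m IH] v p up pp lp sz.
- by move: sz; rewrite leqn0 subn_eq0 leqNgt; have := cb _ up => /= ->.
- case lb: [forall u1, forall u2, R v u1 ==> R v u2 ==> (u1 == u2)].
  + exists v; split.
      case: p up pp lp {sz} => [|a p] //= up pp lp; first by left.
      by right; exists a; case/andP: pp.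
    move=> u1 u2 r1 r2; move/forallP: lb => /(_ u1) /forallP /(_ u2).
    by rewrite r1 r2 => /eqP.
  + move/negbT: lb => /forallPn [u1] /forallPn [u2].
    rewrite !negb_imply => /and3P [r1 r2 ne].
    have ext : forall u, R v u -> u \notin v :: p -> 
      exists v, (v = t0 \/ exists w, R v w) /\
            (forall u1 u2, R v u1 -> R v u2 -> u1 = u2).
      move=> u ru un; apply: (IH u (v :: p)).
      - by rewrite cons_uniq un up.
      - by rewrite /= Rs ru pp.
      - by rewrite /= lp.
      - have hu : uniq (u :: v :: p) by rewrite cons_uniq un up.
        have := cb _ hu; move=> /= H; rewrite /= subnS.
        move: sz; case: (N - size p) => //.
    case i1: (u1 \in v :: p); last by apply: (ext u1) => //; rewrite i1.
    case i2: (u2 \in v :: p); last by apply: (ext u2) => //; rewrite i2.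
    exfalso; apply: noc.
    have : exists2 u, R v u & (u \in p) && (u != head v p).
      rewrite !inE in i1 i2.
      have nv1 : u1 != v by apply: contraTneq r1 => ->; rewrite Ri.
      have nv2 : u2 != v by apply: contraTneq r2 => ->; rewrite Ri.
      rewrite (negPf nv1) /= in i1; rewrite (negPf nv2) /= in i2.
      case h1: (u1 == head v p); last by exists u1 => //; rewrite i1 h1.
      exists u2 => //; rewrite i2 /=; move/eqP: h1 => <-.
      by rewrite eq_sym.
    case=> u ru /andP [uin hn]; move: up pp hn; case/splitPr: uin => p1 p2.
    case: p1 => [|a p1] up pp hn; first by rewrite /= eqxx in hn.
    exists (v :: a :: rcons p1 u); split.
    - have e : v :: (a :: p1) ++ u :: p2 = (v :: a :: rcons p1 u) ++ p2 by rewrite /= -cat_rcons.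
      by move: up; rewrite e cat_uniq => /andP [].
    - by rewrite /= size_rcons.
    - rewrite /cycle rcons_path; apply/andP; split; last by rewrite -rcons_cons last_rcons Rs.
      have e : (a :: p1) ++ u :: p2 = (a :: rcons p1 u) ++ p2 by rewrite /= -cat_rcons.
      by move: pp; rewrite e cat_path => /andP [].
Qed.
Section G.
Variables (V E : finType) (ends : E -> V * V) (k : nat).
Hypothesis ll : loopless ends.

Definition joins (f : E) (u w : V) : bool :=
  (((ends f).1 == u) && ((ends f).2 == w)) || (((ends f).1 == w) && ((ends f).2 == u)).
Local Notation inc := (incident ends).

Definition proper (S : {set E}) (phi : E -> 'I_k) : Prop :=
  forall f g v, f \in S -> g \in S -> inc v f -> inc v g -> phi f = phi g -> f = g.

Definition used (S : {set E}) (phi : E -> 'I_k) (v : V) : {set 'I_k} :=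
  phi @: [set f in S | inc v f].

Lemma joinsC f u w : joins f u w = joins f w u.
Proof. by rewrite /joins orbC. Qed.

Lemma joins_inc1 f u w : joins f u w -> inc u f.
Proof. by rewrite /joins /incident => /orP [] /andP [] /eqP -> /eqP ->; rewrite eqxx ?orbT. Qed.

Lemma joins_inc2 f u w : joins f u w -> inc w f.
Proof. by rewrite joinsC; apply: joins_inc1. Qed.

Lemma joins_neq f u w : joins f u w -> u != w.
Proof.
have := ll f.
by rewrite /joins => H /orP [] /andP [] /eqP e1 /eqP e2; move: H; rewrite e1 e2 // eq_sym.
Qed.

Lemma inc_joins f u w v : joins f u w -> inc v f -> v = u \/ v = w.
Proof.
rewrite /joins /incident => /orP [] /andP [] /eqP -> /eqP -> /orP [] /eqP ->; by auto.
Qed.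

Lemma joins_uniq f u w w' : joins f u w -> joins f u w' -> w = w'.
Proof.
move=> j1 j2; have n1 := joins_neq j1; have n2 := joins_neq j2.
move: j1 j2 n1 n2; rewrite /joins.
by case: (ends f) => a b /= /orP [] /andP [] /eqP -> /eqP -> /orP [] /andP [] /eqP // e1 /eqP e2;
  rewrite ?e1 ?e2 ?eqxx.
Qed.

Lemma usedP (S : {set E}) (phi : E -> 'I_k) v c :
  reflect (exists2 f, f \in S & inc v f && (phi f == c)) (c \in used S phi v).
Proof.
apply: (iffP imsetP) => [[f] | [f fS /andP [vf /eqP <-]]].
  by rewrite inE => /andP [fS vf] ->; exists f; rewrite // vf eqxx.
by exists f; rewrite // inE fS vf.
Qed.


Lemma inDe (D : {set E}) e g : (g \in D :\ e) = (g != e) && (g \in D).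
Proof. by rewrite !inE. Qed.

Lemma ext_proper (D : {set E}) x e y0 (phi : E -> 'I_k) c :
  e \in D -> joins e x y0 -> proper (D :\ e) phi ->
  c \notin used (D :\ e) phi x -> c \notin used (D :\ e) phi y0 ->
  proper D (fun g => if g == e then c else phi g).
Proof.
move=> eD je pp cx cy.
have key : forall g v, g \in D -> g != e -> inc v e -> inc v g -> phi g = c -> False.
  move=> g v gD ge ve vg pg.
  move: vg; case: (inc_joins je ve) => -> vg.
  - by move/usedP: cx; apply; exists g; rewrite ?inDe ?ge ?gD // ?vg pg /=.
  - by move/usedP: cy; apply; exists g; rewrite ?inDe ?ge ?gD // ?vg pg /=.
move=> f g v fD gD vf vg.
case: eqP => [fe|/eqP fe]; case: eqP => [ge|/eqP ge].
- by rewrite fe ge.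
- by move=> h; exfalso; apply: (key g v gD ge); [rewrite -fe | | rewrite h].
- by move=> h; exfalso; apply: (key f v fD fe); [rewrite -ge | | rewrite h].
- move=> h; apply: (pp f g v) => //; rewrite inDe; apply/andP; split => //; exact/eqP.
Qed.


Lemma missing_neq (S : {set E}) (phi : E -> 'I_k) v c g :
  c \notin used S phi v -> g \in S -> inc v g -> c != phi g.
Proof.
move=> cn gS vg; apply: contraNneq cn => ->.
by apply/usedP; exists g; rewrite // vg eqxx.
Qed.

Lemma reroot_proper (D : {set E}) x e y0 f y1 (phi : E -> 'I_k) :
  e \in D -> joins e x y0 -> proper (D :\ e) phi ->
  f \in D :\ e -> joins f x y1 -> phi f \notin used (D :\ e) phi y0 ->
  proper (D :\ f) (fun g => if g == e then phi f else phi g).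
Proof.
move=> eD je pp fS jf fy.
have key : forall h v, h \in D :\ f -> h != e -> inc v e -> inc v h -> phi f = phi h -> False.
  move=> h v hS he ve vh ph.
  have hS' : h \in D :\ e by rewrite inDe he; move: hS; rewrite inDe => /andP [].
  move: vh; case: (inc_joins je ve) => -> vh.
  - have : f = h by apply: (pp f h x) => //; exact: joins_inc1 jf.
    by move=> fh; move: hS; rewrite inDe fh eqxx.
  - by move: (missing_neq fy hS' vh); rewrite ph eqxx.
move=> g h v gS hS vg vh.
case: eqP => [ge|/eqP ge]; case: eqP => [he|/eqP he].
- by rewrite ge he.
- by move=> q; exfalso; apply: (key h v hS he); [rewrite -ge | | rewrite q].
- by move=> q; exfalso; apply: (key g v gS ge); [rewrite -he | | rewrite q].
- move=> q; apply: (pp g h v) => //; rewrite inDe; apply/andP; split => //.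
  + by move: gS; rewrite inDe => /andP [].
  + by move: hS; rewrite inDe => /andP [].
Qed.

Lemma reroot_missing (D : {set E}) e f (phi : E -> 'I_k) u c :
  c \notin used (D :\ e) phi u -> (inc u e -> c != phi f) ->
  c \notin used (D :\ f) (fun g => if g == e then phi f else phi g) u.
Proof.
move=> cn hc; apply/usedP => [[g gS /andP [ug /eqP cg]]].
move: cg; case: eqP => [ge|/eqP ge] cg.
- have /hc : inc u e by rewrite -ge.
  by rewrite cg eqxx.
- move/usedP: cn; apply; exists g; last by rewrite ug cg eqxx.
  by rewrite inDe ge; move: gS; rewrite inDe => /andP [].
Qed.


Lemma path_transfer (r1 r2 : rel V) (P Q : pred V) a s :
  (forall u w, P u -> Q w -> r1 u w -> r2 u w) ->
  P a -> all P s -> all Q s -> path r1 a s -> path r2 a s.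
Proof.
move=> H; elim: s a => [|b s IH] a //= Pa /andP [Pb Ps] /andP [Qb Qs] /andP [r pth].
by rewrite (H _ _ Pa Qb r) /= IH.
Qed.

Definition fr (D : {set E}) x e (phi : E -> 'I_k) : rel V :=
  fun u w => [exists g in D :\ e, joins g x w && (phi g \notin used (D :\ e) phi u)].

Lemma frP (D : {set E}) x e phi u w :
  reflect (exists2 g, g \in D :\ e & joins g x w && (phi g \notin used (D :\ e) phi u))
    (fr D x e phi u w).
Proof.
apply: (iffP existsP) => [[g /andP [gS H]] | [g gS H]]; first by exists g.
by exists g; rewrite gS.
Qed.

Lemma fr_neq D x e phi u w : fr D x e phi u w -> w != x.
Proof. by case/frP => g _ /andP [/joins_neq]; rewrite eq_sym. Qed.

Lemma path_fr_neq D x e phi a s : path (fr D x e phi) a s -> all (fun w => w != x) s.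
Proof.
elim: s a => [|b s IH] a //= /andP [r pth].
by rewrite (fr_neq r) (IH _ pth).
Qed.


Section Kempe.
Variables (S : {set E}) (phi : E -> 'I_k) (a b : 'I_k) (x : V).
Hypothesis pp : proper S phi.

Definition sw (c : 'I_k) := if c == a then b else if c == b then a else c.

Lemma sw_inv c : sw (sw c) = c.
Proof.
rewrite /sw; case: (eqVneq c a) => [->|ca].
  by rewrite eqxx; case: (eqVneq b a) => [->|ba]; rewrite ?eqxx.
case: (eqVneq c b) => [->|cb].
  by rewrite eqxx.
by rewrite ifN // ifN.
Qed.

Lemma sw_id c : c != a -> c != b -> sw c = c.
Proof. by rewrite /sw => /negbTE -> /negbTE ->. Qed.

Definition Hrel : rel V :=
  fun u w => [exists f in S, joins f u w && ((phi f == a) || (phi f == b))].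

Lemma Hrel_sym : symmetric Hrel.
Proof.
by move=> u w; apply/existsP/existsP => [] [f /andP [fS /andP [j c]]]; exists f;
  rewrite fS -joinsC j c.
Qed.

Definition Cset : pred V := fun w => connect Hrel x w.

Definition kphi (f : E) : 'I_k :=
  if (f \in S) && Cset (ends f).1 then sw (phi f) else phi f.

Lemma kphi_at f v : f \in S -> inc v f -> kphi f = if Cset v then sw (phi f) else phi f.
Proof.
move=> fS vf; rewrite /kphi fS /=.
case: (boolP ((phi f == a) || (phi f == b))) => [ab | ].
  have H : Hrel (ends f).1 (ends f).2.
    by apply/existsP; exists f; rewrite fS /joins !eqxx.
  have symc := sym_connect_sym Hrel_sym.
  have -> : Cset (ends f).1 = Cset v => //.
  move: vf; rewrite /incident => /orP [] /eqP <- //.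
  rewrite /Cset; apply/idP/idP => h.
  - exact: connect_trans h (connect1 H).
  - by apply: connect_trans h _; rewrite symc; apply: connect1.
by rewrite negb_or => /andP [h1 h2]; rewrite sw_id // !if_same.
Qed.

Lemma kempe_proper : proper S kphi.
Proof.
move=> f g v fS gS vf vg; rewrite (kphi_at fS vf) (kphi_at gS vg).
case: ifP => _ h; apply: (pp fS gS vf vg) => //.
by rewrite -[phi f]sw_inv h sw_inv.
Qed.

Lemma kempe_used c v :
  (c \in used S kphi v) = ((if Cset v then sw c else c) \in used S phi v).
Proof.
apply/usedP/usedP => [[f fS /andP [vf /eqP <-]] | [f fS /andP [vf /eqP h]]];
  exists f => //; rewrite vf (kphi_at fS vf) /=.
  by case: (Cset v); rewrite ?sw_inv ?eqxx.
by move: h; case: (Cset v) => ->; rewrite ?sw_inv ?eqxx.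
Qed.

Definition sfun (g : 'I_k) (v : V) : V :=
  odflt v [pick w | [exists f in S, joins f v w && (phi f == g)]].

Lemma sfun_eq g v w f : f \in S -> joins f v w -> phi f = g -> sfun g v = w.
Proof.
move=> fS j pg; rewrite /sfun; case: pickP => [w' /existsP [f' /and3P [f'S j' /eqP pg']] | H] /=.
  have ff : f' = f by apply: (pp f'S fS (joins_inc1 j') (joins_inc1 j)); rewrite pg pg'.
  by rewrite ff in j'; apply: joins_uniq j' j.
by move: (H w) => /existsP []; exists f; rewrite fS j pg eqxx.
Qed.

Lemma sfun_none g v : g \notin used S phi v -> sfun g v = v.
Proof.
move=> gn; rewrite /sfun; case: pickP => [w' /existsP [f' /and3P [f'S j' /eqP pg']] | //] /=.
by move/usedP: gn => []; exists f'; rewrite // (joins_inc1 j') pg' eqxx.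
Qed.

Lemma sfun_inv g : involutive (sfun g).
Proof.
move=> v; rewrite {2}/sfun; case: pickP => [w /existsP [f /and3P [fS j /eqP pg]] | H] /=.
  by apply: (sfun_eq fS _ pg); rewrite joinsC.
rewrite /sfun; case: pickP => [w /existsP [f /and3P [fS j /eqP pg]] | //] /=.
by move: (H w) => /existsP []; exists f; rewrite fS j pg eqxx.
Qed.

Lemma Hrel_sfun u w : Hrel u w -> w = sfun a u \/ w = sfun b u.
Proof.
case/existsP => f /and3P [fS j /orP [] /eqP pf].
- by left; rewrite (sfun_eq fS j pf).
- by right; rewrite (sfun_eq fS j pf).
Qed.

Lemma three_ends y z :
  b \notin used S phi x -> a \notin used S phi y -> a \notin used S phi z ->
  Cset y -> Cset z -> y = z.
Proof.
move=> bx ay az cy cz.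
apply: (invol_fix (sfun_inv a) (sfun_inv b) Hrel_sfun (sfun_none bx) cy cz);
  exact: sfun_none.
Qed.

End Kempe.


Lemma card_pairs (T1 T2 : finType) (P : pred T1) (Q : T1 -> pred T2) :
  #|[set p : T1 * T2 | P p.1 && Q p.1 p.2]| = \sum_(a | P a) #|[set b | Q a b]|.
Proof.
rewrite -sum1_card.
have -> : \sum_(a | P a) #|[set b | Q a b]| = \sum_(a | P a) \sum_(b | Q a b) 1.
  by apply: eq_bigr => a _; rewrite -sum1_card; apply: eq_bigl => b; rewrite inE.
rewrite pair_big_dep; apply: eq_bigl => p; by rewrite inE.
Qed.

Definition oth (f : E) (x : V) := if (ends f).1 == x then (ends f).2 else (ends f).1.

Lemma inc_oth f v : inc v f -> joins f v (oth f v).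
Proof.
rewrite /incident /oth /joins; case: eqP => [-> | ne] /=.
  by rewrite !eqxx.
by move=> H; rewrite eqxx H.
Qed.

Section Fan.
Variables (D : {set E}) (x : V).
Hypothesis NC : forall phi, ~ proper D phi.

Lemma ext_false e y0 (phi : E -> 'I_k) c :
  e \in D -> joins e x y0 -> proper (D :\ e) phi ->
  c \notin used (D :\ e) phi x -> c \notin used (D :\ e) phi y0 -> False.
Proof. by move=> eD je pp cx cy; apply: NC (ext_proper eD je pp cx cy). Qed.

Lemma fanA_aux n e y0 (phi : E -> 'I_k) p c :
  size p <= n -> e \in D -> joins e x y0 -> proper (D :\ e) phi ->
  path (fr D x e phi) y0 p -> uniq (y0 :: p) ->
  c \notin used (D :\ e) phi x -> c \notin used (D :\ e) phi (last y0 p) -> False.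
Proof.
elim: n e y0 phi p => [|n IH] e y0 phi [|y1 p] //= sz eD je pp.
- by move=> _ _ cx cy; apply: ext_false eD je pp cx cy.
- by move=> _ _ cx cy; apply: ext_false eD je pp cx cy.
move=> /andP [/frP [f fS /andP [jf fy]] pth].
rewrite inE negb_or => /andP [/andP [y01 y0p] /andP [y1p up]] cx cl.
set phi1 := fun g => if g == e then phi f else phi g.
have fD : f \in D by move: fS; rewrite inDe => /andP [].
have pp1 := reroot_proper eD je pp fS jf fy.
have ax := path_fr_neq pth.
have y1x : y1 != x by rewrite eq_sym (joins_neq jf).
have incE : forall u, u \in y1 :: p -> inc u e -> False.
  move=> u up' ue; case: (inc_joins je ue) => hu; move: up'; rewrite hu.
  + rewrite inE eq_sym (negbTE y1x) /=; by move: ax => /allP /[apply]; rewrite eqxx.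
  + by rewrite inE (negbTE y01) (negbTE y0p).
apply: (IH f y1 phi1 p) => //.
- apply: (path_transfer (P := fun u => u \in y1 :: p) (Q := fun w => w \in p)) pth.
  + move=> u w uin win /frP [g gS /andP [jg gu]]; apply/frP; exists g.
    * rewrite inDe; apply/andP; split; last by move: gS; rewrite inDe => /andP [].
      apply: contraNneq y1p => gf; rewrite -gf in jf.
      by rewrite (joins_uniq jf jg).
    * rewrite jg /phi1 /=.
      have -> : (g == e) = false by move: gS; rewrite inDe => /andP [/negbTE].
      by apply: reroot_missing => // /(incE _ uin).
  + exact: mem_head.
  + by apply/allP => w wp; rewrite inE wp orbT.
  + by apply/allP.
- by rewrite /= y1p.
- apply: reroot_missing => // _; apply: missing_neq cx fS _.
  exact: joins_inc1 jf.
- by apply: reroot_missing => // /(incE _ (mem_last _ _)).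
Qed.


Lemma fanA e y0 (phi : E -> 'I_k) z c :
  e \in D -> joins e x y0 -> proper (D :\ e) phi ->
  connect (fr D x e phi) y0 z ->
  c \notin used (D :\ e) phi x -> c \notin used (D :\ e) phi z -> False.
Proof.
move=> eD je pp /connectP [p pth ->]; case/shortenP: pth => p' pth' up' _.
exact: (fanA_aux (leqnn _) eD je pp pth' up').
Qed.

Lemma reroot_path e y0 f y1 (phi : E -> 'I_k) p :
  e \in D -> joins e x y0 -> proper (D :\ e) phi ->
  f \in D :\ e -> joins f x y1 -> phi f \notin used (D :\ e) phi y0 ->
  path (fr D x e phi) y1 p -> uniq (y0 :: y1 :: p) ->
  path (fr D x f (fun g => if g == e then phi f else phi g)) y1 p.
Proof.
move=> eD je pp fS jf fy pth.
rewrite /= inE negb_or => /andP [/andP [y01 y0p] /andP [y1p up]].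
have ax := path_fr_neq pth.
have y1x : y1 != x by rewrite eq_sym (joins_neq jf).
have incE : forall u, u \in y1 :: p -> inc u e -> False.
  move=> u up' ue; case: (inc_joins je ue) => hu; move: up'; rewrite hu.
  + rewrite inE eq_sym (negbTE y1x) /=; by move: ax => /allP /[apply]; rewrite eqxx.
  + by rewrite inE (negbTE y01) (negbTE y0p).
apply: (path_transfer (P := fun u => u \in y1 :: p) (Q := fun w => w \in p)) pth.
- move=> u w uin win /frP [g gS /andP [jg gu]]; apply/frP; exists g.
  + rewrite inDe; apply/andP; split; last by move: gS; rewrite inDe => /andP [].
    apply: contraNneq y1p => gf; rewrite -gf in jf.
    by rewrite (joins_uniq jf jg).
  + rewrite jg /=.
    have -> : (g == e) = false by move: gS; rewrite inDe => /andP [/negbTE].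
    by apply: reroot_missing => // /(incE _ uin).
- exact: mem_head.
- by apply/allP => w wp; rewrite inE wp orbT.
- by apply/allP.
Qed.

Lemma conn_neq e y0 (phi : E -> 'I_k) w :
  y0 != x -> connect (fr D x e phi) y0 w -> w != x.
Proof.
move=> y0x; apply: (closed_conn (P := fun w => w != x)) => // u v _.
exact: fr_neq.
Qed.

Lemma reroot_conn e y0 f y1 (phi : E -> 'I_k) w :
  e \in D -> joins e x y0 -> proper (D :\ e) phi ->
  f \in D :\ e -> joins f x y1 -> phi f \notin used (D :\ e) phi y0 ->
  connect (fr D x e phi) y0 w ->
  connect (fr D x f (fun g => if g == e then phi f else phi g)) y1 w.
Proof.
move=> eD je pp fS jf fy cw.
set phi1 := fun g => if g == e then phi f else phi g.
have fD : f \in D by move: fS; rewrite inDe => /andP [].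
have fe : f != e by move: fS; rewrite inDe => /andP [].
have y0x : y0 != x by rewrite eq_sym (joins_neq je).
have y1x : y1 != x by rewrite eq_sym (joins_neq jf).
have y10 : y1 != y0.
  apply: contraNneq fy => <-; apply/usedP; exists f => //.
  by rewrite (joins_inc2 jf) eqxx.
suff: (w != x) && connect (fr D x f phi1) y1 w by case/andP.
apply: (closed_conn (P := fun w => (w != x) && connect (fr D x f phi1) y1 w)) cw.
- move=> u v /andP [ux cu] /frP [g gS /andP [jg gu]].
  rewrite (@fr_neq D x e phi u v); last by apply/frP; exists g; rewrite // jg gu.
  case: (eqVneq g f) => [gf | gf].
    by rewrite gf in jg; rewrite -(joins_uniq jf jg) /= connect0.
  apply: connect_trans cu (connect1 _); apply/frP; exists g.
    by rewrite inDe gf; move: gS; rewrite inDe => /andP [].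
  rewrite jg /phi1.
  have -> : (g == e) = false by move: gS; rewrite inDe => /andP [/negbTE].
  apply: reroot_missing => // _.
  apply/eqP => h; move/eqP: gf; apply.
  exact: (pp g f x gS fS (joins_inc1 jg) (joins_inc1 jf) h).
- rewrite y0x /=; apply: connect1; apply/frP; exists e.
    by rewrite inDe eD andbT eq_sym.
  rewrite je /phi1 eqxx /=; apply/usedP => [[g gS /andP [y1g /eqP pg]]].
  move: pg; case: (eqVneq g e) => [ge | ge] pg.
    by rewrite ge in y1g; case: (inc_joins je y1g) => /eqP; rewrite ?(negbTE y1x) ?(negbTE y10).
  have gS' : g \in D :\ e by rewrite inDe ge; move: gS; rewrite inDe => /andP [].
  have gf : g = f by apply: (pp g f y1 gS' fS y1g (joins_inc2 jf)).
  by move: gS; rewrite inDe gf eqxx.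
Qed.


Lemma setDe_inc (S : {set E}) e v :
  [set f in S :\ e | inc v f] = [set f in S | inc v f] :\ e.
Proof. by apply/setP => g; rewrite !inE andbA. Qed.

Lemma card_setDe_inc (S : {set E}) e v :
  #|[set f in S | inc v f]| = (e \in S) && inc v e + #|[set f in S :\ e | inc v f]|.
Proof. by rewrite setDe_inc (cardsD1 e) inE. Qed.

Hypothesis Hdx : #|[set f in D | inc x f]| <= k.

Lemma miss_x e (phi : E -> 'I_k) : e \in D -> inc x e ->
  exists b, b \notin used (D :\ e) phi x.
Proof.
move=> eD xe; case: (pickP [pred c | c \notin used (D :\ e) phi x]) => [c H | H].
  by exists c.
have : #|[set: 'I_k]| <= #|used (D :\ e) phi x|.
  by apply: subset_leq_card; apply/subsetP => c _; move: (H c) => /= /negbFE.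
rewrite cardsT card_ord => h.
have h2 := leq_imset_card phi [set f in D :\ e | inc x f].
move: Hdx; rewrite (card_setDe_inc _ e) eD xe /= => h3.
have := leq_trans h (leq_trans h2 (leqnn _)); rewrite /used => h4.
by move: (leq_trans h4 (leqnn _)); rewrite leqNgt; move: h3; rewrite add1n => ->.
Qed.

Lemma path_transfer_src (r1 r2 : rel V) (P : pred V) a s :
  (forall u w, P u -> r1 u w -> r2 u w) ->
  all P (belast a s) -> path r1 a s -> path r2 a s.
Proof.
move=> H; elim: s a => [|b s IH] a //= /andP [Pa Ps] /andP [r pth].
by rewrite (H _ _ Pa r) /= IH.
Qed.

Lemma root0 e y0 (phi : E -> 'I_k) a p :
  e \in D -> joins e x y0 -> proper (D :\ e) phi ->
  a \notin used (D :\ e) phi y0 -> path (fr D x e phi) y0 p ->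
  last y0 p != y0 -> a \notin used (D :\ e) phi (last y0 p) ->
  all (fun u => (u == y0) || (a \in used (D :\ e) phi u)) (belast y0 p) -> False.
Proof.
move=> eD je pp ay0 pth zn az hsrc.
have xe := joins_inc1 je.
have [b bx] := miss_x phi eD xe.
set S := D :\ e.
set C := Cset S phi a b x.
set kp := kphi S phi a b x.
have Cx : C x by apply: connect0.
have swa : sw a b a = b by rewrite /sw eqxx.
have kpp : proper S kp by apply: kempe_proper.
have kax : a \notin used S kp x by rewrite kempe_used -/C Cx swa.
case Cy0 : (C y0).
- case Cz : (C (last y0 p)).
    by move/eqP: zn; apply; apply: (three_ends pp bx az ay0).
  apply: (fanA eD je kpp _ kax (c := a) (z := last y0 p)); last by rewrite kempe_used -/C Cz.
  apply/connectP; exists p => //.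
  apply: (path_transfer_src (P := fun u => (u == y0) || (a \in used (D :\ e) phi u))) hsrc pth.
  move=> u w Pu /frP [g gS /andP [jg gu]]; apply/frP; exists g => //.
  rewrite jg /= kempe_used -/C /kp (kphi_at _ _ _ _ gS (joins_inc1 jg)) -/C Cx.
  case Cu : (C u); first by rewrite sw_inv.
  have ay : a \in used S phi u.
    by case/orP: Pu => // /eqP uy; rewrite uy Cy0 in Cu.
  rewrite sw_id //.
  + by apply: contraNneq gu => ->.
  + by rewrite eq_sym; apply: (missing_neq bx gS (joins_inc1 jg)).
- apply: (ext_false eD je kpp kax); by rewrite kempe_used -/C Cy0.
Qed.


Lemma rootR e y0 (phi : E -> 'I_k) a z :
  e \in D -> joins e x y0 -> proper (D :\ e) phi ->
  a \notin used (D :\ e) phi y0 -> connect (fr D x e phi) y0 z ->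
  z != y0 -> a \notin used (D :\ e) phi z -> False.
Proof.
move=> eD je pp ay0 /connectP [p pth ->] zn az.
set pr := fun u => (u != y0) && (a \notin used (D :\ e) phi u).
have hp : has pr p.
  apply/hasP; exists (last y0 p); last by rewrite /pr zn az.
  by move: (mem_last y0 p); rewrite inE (negbTE zn).
move: pth; case/split_find: hp => z' p1 p2 prz nhas.
rewrite cat_path => /andP [pth _].
apply: (root0 eD je pp ay0 pth); rewrite ?last_rcons.
- by case/andP: prz.
- by case/andP: prz.
rewrite belast_rcons /= eqxx /=; apply/allP => u up1.
have : ~~ pr u by apply: contra nhas => h; apply/hasP; exists u.
rewrite /pr negb_and !negbK => /orP [h|h]; by rewrite h ?orbT.
Qed.

Lemma fanB_aux n e y0 (phi : E -> 'I_k) p z' c :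
  size p <= n -> e \in D -> joins e x y0 -> proper (D :\ e) phi ->
  path (fr D x e phi) y0 p -> uniq (y0 :: p) ->
  connect (fr D x e phi) y0 z' -> last y0 p != z' ->
  c \notin used (D :\ e) phi (last y0 p) -> c \notin used (D :\ e) phi z' -> False.
Proof.
elim: n e y0 phi p => [|n IH] e y0 phi p sz eD je pp pth up cz' zz cz cz2.
  case: p sz pth up zz cz => // _ _ _ /= zz cz.
  by apply: (rootR eD je pp cz cz' _ cz2); rewrite eq_sym.
case: (eqVneq z' y0) => [zy | zy].
  rewrite zy in zz cz2.
  apply: (rootR eD je pp cz2 _ zz cz).
  by apply/connectP; exists p.
case: p sz pth up zz cz => [|y1 p] sz pth up zz cz.
  by apply: (rootR eD je pp cz cz' _ cz2); rewrite eq_sym.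
move: pth => /= /andP [/frP [f fS /andP [jf fy]] pth].
have fD : f \in D by move: fS; rewrite inDe => /andP [].
have pp1 := reroot_proper eD je pp fS jf fy.
have pth1 := reroot_path eD je pp fS jf fy pth up.
have y0x : y0 != x by rewrite eq_sym (joins_neq je).
have z'x : z' != x by apply: conn_neq cz'.
have lx : last y1 p != x.
  have y1x : y1 != x by rewrite eq_sym (joins_neq jf).
  have := mem_last y1 p; rewrite inE => /orP [/eqP -> // | lp].
  by move: (path_fr_neq pth) => /allP /(_ _ lp).
have ly0 : last y1 p != y0.
  move: up; rewrite /= inE negb_or => /andP [/andP [y01 y0p] _].
  apply: contraNneq y0p => h.
  by move: (mem_last y1 p); rewrite h inE (negbTE y01).
apply: (IH f y1 _ p _ fD jf pp1 pth1 _ _ zz).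
- by [].
- by move: up => /= /andP [_].
- exact: (reroot_conn eD je pp fS jf fy cz').
- apply: reroot_missing => // /(inc_joins je) [] /eqP; by rewrite ?(negbTE lx) ?(negbTE ly0).
- apply: reroot_missing => // /(inc_joins je) [] /eqP; by rewrite ?(negbTE z'x) ?(negbTE zy).
Qed.

Lemma fanB e y0 (phi : E -> 'I_k) z z' c :
  e \in D -> joins e x y0 -> proper (D :\ e) phi ->
  connect (fr D x e phi) y0 z -> connect (fr D x e phi) y0 z' -> z != z' ->
  c \notin used (D :\ e) phi z -> c \notin used (D :\ e) phi z' -> False.
Proof.
move=> eD je pp /connectP [p pth ->]; case/shortenP: pth => p' pth' up' _.
exact: (fanB_aux (leqnn _) eD je pp pth' up').
Qed.


Lemma fan_count e y0 (phi : E -> 'I_k) :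
  e \in D -> joins e x y0 -> proper (D :\ e) phi ->
  \sum_(z | connect (fr D x e phi) y0 z) #|[set c | c \notin used (D :\ e) phi z]| <=
  \sum_(z | connect (fr D x e phi) y0 z) #|[set f | (f \in D :\ e) && joins f x z]|.
Proof.
move=> eD je pp.
set Z := fun z => connect (fr D x e phi) y0 z.
rewrite -(card_pairs Z (fun z c => c \notin used (D :\ e) phi z)).
rewrite -(card_pairs Z (fun z f => (f \in D :\ e) && joins f x z)).
set PM := [set _ | _]; set PE := [set _ | _].
pose h (pc : V * 'I_k) : V * E :=
  if [pick f in D :\ e | inc x f && (phi f == pc.2)] is Some f then (oth f x, f) else (pc.1, e).
have hP : forall pc, pc \in PM -> exists2 f, (f \in D :\ e) && (phi f == pc.2) & h pc = (oth f x, f) /\ inc x f.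
  case=> z c; rewrite inE /= => /andP [Zz cz].
  rewrite /h; case: pickP => [f /andP [fS /andP [xf pf]] | H] /=.
    by exists f; rewrite ?fS ?pf.
  exfalso; apply: (fanA eD je pp Zz _ cz).
  apply/negP => /usedP [f fS /andP [xf /eqP pf]].
  by move: (H f); rewrite /= fS xf pf eqxx.
apply: leq_trans (subset_leq_card (_ : h @: PM \subset PE)).
  rewrite card_in_imset // => pc pc' Hpc Hpc'.
  have [f /andP [fS /eqP pf] [hf xf]] := hP pc Hpc.
  have [f' /andP [f'S /eqP pf'] [hf' xf']] := hP pc' Hpc'.
  rewrite hf hf' => [[_ ff]]; rewrite ff in pf.
  move: pc pc' Hpc Hpc' pf pf' {hf hf'} => [z c] [z' c'] /=.
  rewrite !inE /= => /andP [Zz cz] /andP [Zz' cz'] pf pf'.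
  have cc : c = c' by rewrite -pf -pf'.
  rewrite cc in cz *; case: (eqVneq z z') => [-> // | zz].
  by exfalso; apply: (fanB eD je pp Zz Zz' zz cz cz').
apply/subsetP => q /imsetP [pc Hpc ->].
have [f /andP [fS /eqP pf] [hf xf]] := hP pc Hpc.
rewrite hf inE /= fS (inc_oth xf) andbT.
move: pc Hpc pf {hf} => [z c]; rewrite inE /= => /andP [Zz cz] pf.
rewrite /Z andbT; apply: connect_trans Zz (connect1 _); apply/frP; exists f => //.
by rewrite (inc_oth xf) pf cz.
Qed.

End Fan.


Definition dA (A : {set E}) v := #|[set f in A | inc v f]|.
Definition mA (A : {set E}) v w := #|[set f in A | joins f v w]|.
Definition mmA (A : {set E}) v := \max_(w : V) mA A v w.
Definition Hyp (A : {set E}) :=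
  (forall v, dA A v + mmA A v <= k.+1) /\
  (forall v w, k.+1 <= dA A v + mmA A v -> k.+1 <= dA A w + mmA A w -> 0 < mA A v w ->
     Gstar_adj ends v w).

Lemma mA_sym A v w : mA A v w = mA A w v.
Proof. by apply: eq_card => f; rewrite !inE joinsC. Qed.

Lemma mA_le_dA A v w : mA A v w <= dA A v.
Proof.
apply: subset_leq_card; apply/subsetP => f; rewrite !inE => /andP [-> /joins_inc1 ->].
by [].
Qed.

Lemma mmA_le_dA A v : mmA A v <= dA A v.
Proof. by apply/bigmax_leqP => w _; apply: mA_le_dA. Qed.

Lemma mA_le_mmA A v w : mA A v w <= mmA A v.
Proof. by rewrite /mmA; apply: leq_bigmax. Qed.

Lemma Hyp_sub (A B : {set E}) : B \subset A -> Hyp A -> Hyp B.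
Proof.
move=> BA [H1 H2].
have hd : forall v, dA B v <= dA A v.
  move=> v; apply: subset_leq_card; apply/subsetP => f; rewrite !inE => /andP [fB ->].
  by rewrite (subsetP BA _ fB).
have hm : forall v w, mA B v w <= mA A v w.
  move=> v w; apply: subset_leq_card; apply/subsetP => f; rewrite !inE => /andP [fB ->].
  by rewrite (subsetP BA _ fB).
have hmm : forall v, mmA B v <= mmA A v.
  move=> v; apply/bigmax_leqP => w _; exact: leq_trans (hm v w) (mA_le_mmA A v w).
split.
  move=> v; apply: leq_trans (H1 v); exact: leq_add (hd v) (hmm v).
move=> v w hv hw hvw; apply: H2.
- apply: leq_trans hv _; exact: leq_add (hd v) (hmm v).
- apply: leq_trans hw _; exact: leq_add (hd w) (hmm w).
- exact: leq_trans hvw (hm v w).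
Qed.


Lemma sum_le1 (P Q : pred V) :
  (forall z1 z2, Q z1 -> Q z2 -> z1 = z2) -> \sum_(z | P z) (Q z : nat) <= 1.
Proof.
move=> U; case: (pickP [pred z | P z && Q z]) => [z0 /andP [Pz0 Qz0] | H].
  rewrite (bigD1 z0) //= big1 ?Qz0 // => z /andP [Pz nz].
  case Qz: (Q z) => //; by rewrite (U z z0 Qz Qz0) eqxx in nz.
rewrite big1 // => z Pz; move: (H z); rewrite /= Pz; by case: (Q z).
Qed.

Lemma step_false (A : {set E}) x e (phi : E -> 'I_k) :
  Hyp A -> e \in A -> inc x e ->
  (forall z1 z2, k.+1 <= dA A z1 + mmA A z1 -> 0 < mA A x z1 ->
                 k.+1 <= dA A z2 + mmA A z2 -> 0 < mA A x z2 -> z1 = z2) ->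
  proper (A :\ e) phi -> (forall phi, ~ proper A phi) -> False.
Proof.
move=> [H1 H2] eA xe U pp NC.
set y0 := oth e x.
have je : joins e x y0 := inc_oth xe.
have my0 : 0 < mA A x y0 by apply/card_gt0P; exists e; rewrite inE eA je.
have Hdx : #|[set f in A | inc x f]| <= k.
  have := H1 x; have := leq_trans my0 (mA_le_mmA A x y0); rewrite /dA; lia.
set Z := fun z => connect (fr A x e phi) y0 z.
have FC := fan_count NC Hdx eA je pp.
set T := fun z => k.+1 <= dA A z + mmA A z.
pose b z := T z && (0 < mA A x z).
have per : forall z, Z z ->
    #|[set f | (f \in A :\ e) && joins f x z]| + 2 * (z == y0) <=
    #|[set c | c \notin used (A :\ e) phi z]| + b z.
  move=> z Zz.
  have y0x : y0 != x by rewrite eq_sym (joins_neq je).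
  have zx : z != x by apply: (conn_neq y0x Zz).
  have mz : 0 < mA A x z.
    apply: (closed_conn (P := fun w => 0 < mA A x w)) Zz => // u w _ /frP [g gS /andP [jg _]].
    by apply/card_gt0P; exists g; rewrite inE jg andbT; move: gS; rewrite inDe => /andP [].
  have F2 : #|[set c | c \notin used (A :\ e) phi z]| + #|[set f in A :\ e | inc z f]| = k.
    have -> : #|[set f in A :\ e | inc z f]| = #|used (A :\ e) phi z|.
      rewrite card_in_imset // => f g; rewrite !inE => /andP [fS zf] /andP [gS zg].
      by apply: (pp f g z); rewrite ?inE.
    have -> : [set c | c \notin used (A :\ e) phi z] = ~: used (A :\ e) phi z.
      by apply/setP => c; rewrite !inE.
    by rewrite addnC cardsC cardT size_enum_ord.
  have ey : inc z e = (z == y0).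
    apply/idP/eqP => [ze | ->]; last exact: joins_inc2 je.
    by case: (inc_joins je ze) => // /eqP; rewrite (negbTE zx).
  have F3 : #|[set f in A :\ e | inc z f]| + (z == y0) = dA A z.
    by rewrite /dA (card_setDe_inc A e z) eA ey /= addnC.
  have F4 : #|[set f | (f \in A :\ e) && joins f x z]| + (z == y0) = mA A x z.
    rewrite /mA (cardsD1 e [set f in A | joins f x z]) inE eA /=.
    have -> : joins e x z = (z == y0).
      apply/idP/eqP => [jz | ->] //; exact: (joins_uniq jz je).
    rewrite addnC; congr (_ + _); apply: eq_card => f; rewrite !inE.
    by rewrite andbA.
  have F5 : mA A x z <= mmA A z by rewrite mA_sym; apply: mA_le_mmA.
  have F6 : dA A z + mmA A z <= k + b z.
    rewrite /b mz andbT; case Tz : (T z); first by rewrite addn1; apply: H1.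
    by move: Tz; rewrite /T => /negbT; rewrite -ltnNge ltnS addn0.
  lia.
have S2 : \sum_(z | Z z) (2 * (z == y0)) = 2.
  rewrite (bigD1 y0) /=; last exact: connect0.
  by rewrite eqxx big1 // => z /andP [_ /negbTE ->].
have S3 : \sum_(z | Z z) b z <= 1.
  apply: sum_le1 => z1 z2 /andP [T1 m1] /andP [T2 m2]; exact: U.
have S1 : \sum_(z | Z z) #|[set f | (f \in A :\ e) && joins f x z]| + 2 <=
          \sum_(z | Z z) #|[set c | c \notin used (A :\ e) phi z]| + \sum_(z | Z z) b z.
  rewrite -{1}S2 -!big_split; by apply: leq_sum.
have FC' : \sum_(z | Z z) #|[set c | c \notin used (A :\ e) phi z]| <=
           \sum_(z | Z z) #|[set f | (f \in A :\ e) && joins f x z]| := FC.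
move: FC' S1 S3; lia.
Qed.


Lemma choose_x (A : {set E}) :
  Hyp A -> Gstar_no_long_cycle ends -> 0 < k -> A != set0 ->
  exists x e, [/\ e \in A, inc x e &
   (forall z1 z2, k.+1 <= dA A z1 + mmA A z1 -> 0 < mA A x z1 ->
                  k.+1 <= dA A z2 + mmA A z2 -> 0 < mA A x z2 -> z1 = z2)].
Proof.
move=> [H1 H2] NoLC k0 An0.
set T := fun v => k.+1 <= dA A v + mmA A v.
case: (pickP T) => [t0 Tt0 | noT]; last first.
  case/set0Pn: An0 => e eA; exists (ends e).1, e; split => //.
    by rewrite /incident eqxx.
  by move=> z1 z2 T1; move: (noT z1); rewrite /T T1.
pose R := fun v w => [&& T v, T w & 0 < mA A v w].
have Rs : symmetric R.
  by move=> v w; rewrite /R mA_sym andbA [T v && _]andbC -andbA.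
have Ri : irreflexive R.
  move=> v; rewrite /R; apply/negP => /and3P [_ _ /card_gt0P [f]].
  by rewrite inE => /andP [_ /joins_neq]; rewrite eqxx.
have nolc : ~ (exists s : seq V, [/\ uniq s, 3 <= size s & cycle R s]).
  move=> [s [us ss cs]]; apply: NoLC; exists s; split => //.
  by apply: sub_cycle cs => u w /and3P [Tu Tw m]; apply: H2.
have [v [vT leaf]] := leaf_exists t0 Rs Ri nolc.
have Tv : T v by case: vT => [-> // | [w /and3P []]].
have dv : 0 < dA A v.
  move: Tv; rewrite /T; have := mmA_le_dA A v; lia.
case/card_gt0P: dv => e; rewrite inE => /andP [eA ve].
exists v, e; split => // z1 z2 T1 m1 T2 m2.
by apply: leaf; apply/and3P; split.
Qed.

Lemma main_ind : Gstar_no_long_cycle ends -> 0 < k ->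
  forall n (A : {set E}), #|A| <= n -> Hyp A -> exists phi, proper A phi.
Proof.
move=> NoLC k0; elim=> [|n IH] A cA HA.
  have -> : A = set0 by apply/eqP; rewrite -cards_eq0 -leqn0.
  by exists (fun=> Ordinal k0) => f g v; rewrite inE.
case: (eqVneq A set0) => [-> | An0].
  by exists (fun=> Ordinal k0) => f g v; rewrite inE.
have [x [e [eA xe U]]] := choose_x HA NoLC k0 An0.
have [phi pp] : exists phi, proper (A :\ e) phi.
  apply: IH; last by apply: Hyp_sub HA; apply: subD1set.
  by move: cA; rewrite (cardsD1 e A) eA add1n ltnS.
apply: NNPP => nc.
apply: (step_false HA eA xe U pp) => phi' pp'; apply: nc; by exists phi'.
Qed.

End G.

Unset Implicit Arguments.
Theorem mainTheorem5 (V E : finType) (ends : E -> V * V) (k : nat) :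
  loopless ends ->
  1 <= k ->
  Delta_mu ends - 1 <= k ->
  Gstar_no_long_cycle ends ->
  edge_colorable ends k.
Proof.
move=> ll k0 hD NoLC.
have HT : Hyp ends k setT.
  have ed : forall v, dA ends setT v = deg ends v.
    by move=> v; apply: eq_card => f; rewrite !inE.
  have em : forall v w, mA ends setT v w = mult ends v w.
    by move=> v w; apply: eq_card => f; rewrite !inE.
  have emm : forall v, mmA ends setT v = mult_max ends v.
    by move=> v; apply: eq_bigr => w _; apply: em.
  have le : forall v, deg ends v + mult_max ends v <= Delta_mu ends.
    by move=> v; rewrite /Delta_mu; apply: leq_bigmax.
  split => [v | v w hv hw hvw].
    by rewrite ed emm; apply: leq_trans (le v) _; lia.
  rewrite ed emm in hv; rewrite ed emm in hw; rewrite em in hvw.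
  rewrite /Gstar_adj /in_Gstar hvw andbT.
  have := le v; have := le w; move: hv hw; lia.
have [phi pp] := main_ind ll NoLC k0 (leqnn _) HT.
exists phi => f g fg [v /andP [vf vg]]; apply: contraNneq fg => h.
by apply/eqP; apply: (pp f g v); rewrite ?inE.
Qed.
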